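(* Let $f_1,\dots,f_m\in\mathbb{C}[x_1,\dots,x_n]$ and consider an action-matrix solver for the action polynomial $f=x_1$, given by the data described in the context: the basis monomials $B_a=\{\mathbf{x}^{\alpha_1},\dots,\mathbf{x}^{\alpha_r}\}$, the reducible monomials $B_r$, the reduced excess monomials $\hat B_e$, the elimination template $\hat{\mathbf{C}}=\begin{bmatrix}\hat{\mathbf{C}}_{11}&\mathbf{C}_{12}&\mathbf{C}_{13}\\ \hat{\mathbf{C}}_{21}&\mathbf{C}_{22}&\mathbf{C}_{23}\end{bmatrix}$ with Gauss–Jordan form $\begin{bmatrix}\mathbf{I}&\mathbf{0}&\hat{\mathbf{C}}'_{13}\\ \mathbf{0}&\mathbf{I}&\mathbf{C}'_{23}\end{bmatrix}$, and the action matrix $\mathbf{M}_f$. Construct the sparse resultant matrix $$\mathbf{M}(u_0)=\begin{bmatrix}\mathbf{A}_{11}&\mathbf{A}_{12}\\ \mathbf{A}_{21}-u_0\mathbf{I}&\mathbf{A}_{22}\end{bmatrix},\qquad \mathbf{A}_{11}=\begin{bmatrix}\mathbf{C}_{13}\\ \mathbf{C}_{23}\end{bmatrix},\quad \mathbf{A}_{12}=\begin{bmatrix}\hat{\mathbf{C}}_{11}&\mathbf{C}_{12}\\ \hat{\mathbf{C}}_{21}&\mathbf{C}_{22}\end{bmatrix},$$ with columns indexed by $\mathbf{b}_1=\mathbf{b}_a$ followed by $\mathbf{b}_2=(\hat{\mathbf{b}}_e,\mathbf{b}_r)$, where the $j$-th row of the lower block $\begin{bmatrix}\mathbf{A}_{21}-u_0\mathbf{I}&\mathbf{A}_{22}\end{bmatrix}$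 is the coefficient vector, with respect to $(\mathbf{b}_1,\mathbf{b}_2)$, of the polynomial $\mathbf{x}^{\alpha_j}(x_1-u_0)$ (here $\mathbf{A}_{21}$ and $\mathbf{A}_{22}$ are $0/1$ matrices), and let $\mathbf{X}=\mathbf{A}_{21}-\mathbf{A}_{22}\mathbf{A}_{12}^{-1}\mathbf{A}_{11}$ be the Schur complement. Then the action-matrix solver and this sparse-resultant solver are equivalent: $\mathbf{X}=\mathbf{M}_f$, and the Gauss–Jordan elimination of $\hat{\mathbf{C}}$ can be replaced by the product $\mathbf{A}_{12}^{-1}\mathbf{A}_{11}$, namely $\mathbf{A}_{12}^{-1}\mathbf{A}_{11}=\begin{bmatrix}\hat{\mathbf{C}}'_{13}\\ \mathbf{C}'_{23}\end{bmatrix}$ (and $\hat{\mathbf{C}}$ has the same size as the upper block $\begin{bmatrix}\mathbf{A}_{11}&\mathbf{A}_{12}\end{bmatrix}$).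
   Context: Action-matrix solver data: $B_a=\{\mathbf{x}^{\alpha_1},\dots,\mathbf{x}^{\alpha_r}\}$ is a set of monomials whose cosets form a linear basis of the quotient ring $\mathbb{C}[x_1,\dots,x_n]/\langle f_1,\dots,f_m\rangle$; $B_r=\{x_1\mathbf{x}^{\alpha}\mid \mathbf{x}^{\alpha}\in B_a\}\setminus B_a$; monomial multiple sets $T_1,\dots,T_m$ give the extended system $\{t f_i : t\in T_i\}$, whose monomials are split as $B_e\sqcup B_r\sqcup B_a$; $\hat B_e\subseteq B_e$ is obtained by deleting excess monomials whose columns are linearly dependent. The elimination template $\hat{\mathbf{C}}$ is the coefficient matrix of the extended system with columns indexed by the ordered vectors $\hat{\mathbf{b}}_e,\mathbf{b}_r,\mathbf{b}_a$ of $\hat B_e,B_r,B_a$ (column blocks as displayed), rows partitioned so that $\mathbf{C}_{22}$ is square invertible, and such that $\begin{bmatrix}\hat{\mathbf{C}}_{11}&\mathbf{C}_{12}\\ \hat{\mathbf{C}}_{21}&\mathbf{C}_{22}\end{bmatrix}$ is square invertible, so its Gauss–Jordan form is $\begin{bmatrix}\mathbf{I}&\mathbf{0}&\hat{\mathbf{C}}'_{13}\\ \mathbf{0}&\mathbf{I}&\mathbf{C}'_{23}\end{bmatrix}$, the rows of $\mathbf{C}'_{23}$ being indexed by the monomials of $\mathbf{b}_r$. The $r\times r$ action matrix $\mathbf{M}_f$ ($f=x_1$) is defined row by row: if $x_1\mathbf{x}^{\alpha_j}=\mathbf{x}^{\alpha_i}\in B_a$, its $j$-th row has $1$ in column $i$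 and $0$ elsewhere; otherwise $x_1\mathbf{x}^{\alpha_j}$ is the $i$-th monomial of $\mathbf{b}_r$ and the $j$-th row of $\mathbf{M}_f$ is the $i$-th row of $-\mathbf{C}'_{23}$. *)

(* Defs.v *)
From HB Require Import structures.
From mathcomp Require Import all_boot all_order all_algebra.
From mathcomp Require Import mpoly.
Set Implicit Arguments. Unset Strict Implicit. Unset Printing Implicit Defensive.
Import Order.TTheory GRing.Theory.
Local Open Scope ring_scope.

Section ActionMatrixSolver.
Variables (F : fieldType) (n m : nat).
Implicit Types (p : {mpoly F[n]}) (f : 'I_m -> {mpoly F[n]}).

Definition in_ideal f p : Prop :=
  exists g : 'I_m -> {mpoly F[n]}, p = \sum_(i < m) g i * f i.

(* the cosets of the monomials of ba form a linear basis of
   F[x_1..x_n] / < f_1, ..., f_m > *)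
Definition quotient_basis f (ba : seq 'X_{1..n}) : Prop :=
  (forall c : 'I_(size ba) -> F,
      in_ideal f (\sum_(j < size ba) c j *: 'X_[nth mnm0 ba j]) ->
      forall j, c j = 0)
  /\ (forall p, exists c : 'I_(size ba) -> F,
      in_ideal f (p - \sum_(j < size ba) c j *: 'X_[nth mnm0 ba j])).

Definition mulx1 (i1 : 'I_n) (a : 'X_{1..n}) : 'X_{1..n} := mnm_add (mnm1 i1) a.

Definition is_Br (i1 : 'I_n) (ba br : seq 'X_{1..n}) : Prop :=
  uniq br /\ forall mo, (mo \in br) = has (fun a => mo == mulx1 i1 a) ba && (mo \notin ba).

Definition ext_system f (T : 'I_m -> seq 'X_{1..n}) : seq {mpoly F[n]} :=
  flatten [seq [seq 'X_[t] * f i | t <- T i] | i <- enum 'I_m].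

Definition in_system f T (mo : 'X_{1..n}) : bool :=
  has (fun q => mo \in msupp q) (ext_system f T).

Definition coef_mx (N K : nat) (rows : 'I_N -> {mpoly F[n]}) (cols : seq 'X_{1..n})
  : 'M[F]_(N, K) := \matrix_(k, j) (rows k)@_(nth mnm0 cols j).

Definition action_mx (i1 : 'I_n) (ba br : seq 'X_{1..n}) (sr : nat) (C23' : 'M[F]_(sr, size ba))
  : 'M[F]_(size ba) :=
  \matrix_(j, i)
    let mj := mulx1 i1 (nth mnm0 ba j) in
    if mj \in ba then (index mj ba == i)%:R
    else match [pick k : 'I_sr | nth mnm0 br k == mj] with
         | Some k => - C23' k i
         | None => 0
         end.

Definition lower_block (i1 : 'I_n) (ba bhe br : seq 'X_{1..n}) (u0 : F)
  : 'M[F]_(size ba, size ba + (size bhe + size br)) :=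
  \matrix_(j, c) ('X_[nth mnm0 ba j] * ('X_i1 - u0%:MP))@_(nth mnm0 (ba ++ bhe ++ br) c).

End ActionMatrixSolver.

Arguments action_mx {F n} i1 ba br {sr} C23'.
Arguments coef_mx {F n N} K rows cols.
Arguments lower_block {F n} i1 ba bhe br u0.

(* Main.v *)
Require Import Defs.
From HB Require Import structures.
From mathcomp Require Import all_boot all_order all_algebra.
From mathcomp Require Import mpoly.
Import GRing.Theory.
Local Open Scope ring_scope.

Lemma lb_coef (F : fieldType) n (i1 : 'I_n) (a mo : 'X_{1..n}) (u0 : F) :
  ('X_[a] * ('X_i1 - u0%:MP) : {mpoly F[n]})@_mo
  = (mulx1 i1 a == mo)%:R - u0 * (a == mo)%:R.
Proof.
rewrite mulrBr mcoeffB -mpolyXD [_ * u0%:MP]mulrC mul_mpolyC mcoeffZ !mcoeffX.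
by rewrite /mulx1 addmC.
Qed.
Theorem proposition2 (F : fieldType) (n m : nat) (hn : (0 < n)%N)
  (f : 'I_m -> {mpoly F[n]}) (T : 'I_m -> seq 'X_{1..n})
  (ba br be_hat : seq 'X_{1..n})
  (rowpoly : 'I_(size be_hat + size br) -> {mpoly F[n]})
  (C13' : 'M[F]_(size be_hat, size ba)) (C23' : 'M[F]_(size br, size ba)) :
  let i1 : 'I_n := Ordinal hn in
  let sys := ext_system f T in
  (* B_a is a monomial basis of the quotient ring *)
  uniq ba -> quotient_basis f ba ->
  (* B_r *)
  is_Br i1 ba br ->
  (* monomial sets T_i; the monomials of the system are B_e ⊔ B_r ⊔ B_a *)
  (forall i, uniq (T i)) ->
  (forall mo, mo \in ba ++ br -> in_system f T mo) ->
  (* \hat B_e ⊆ B_e *)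
  uniq be_hat ->
  (forall mo, mo \in be_hat -> [&& in_system f T mo, mo \notin br & mo \notin ba]) ->
  (* the rows of the template enumerate the extended system *)
  perm_eq [seq rowpoly k | k <- enum 'I_(size be_hat + size br)] sys ->
  let Chat : 'M[F]_(size be_hat + size br, (size be_hat + size br) + size ba) :=
    coef_mx ((size be_hat + size br) + size ba) rowpoly (be_hat ++ br ++ ba) in
  let A12 : 'M[F]_(size be_hat + size br) := lsubmx Chat in
  let A11 : 'M[F]_(size be_hat + size br, size ba) := rsubmx Chat in
  (* C22 and [C11 C12; C21 C22] are invertible *)
  drsubmx A12 \in unitmx -> A12 \in unitmx ->
  (* Gauss-Jordan form of Chat is [I 0 C13'; 0 I C23'] *)
  (exists P : 'M[F]_(size be_hat + size br),
      P \in unitmx /\ P *m Chat = row_mx 1%:M (col_mx C13' C23')) ->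
  let A21 : 'M[F]_(size ba) := lsubmx (lower_block i1 ba be_hat br 0) in
  let A22 : 'M[F]_(size ba, size be_hat + size br) :=
    rsubmx (lower_block i1 ba be_hat br 0) in
  (* conclusions *)
  (forall u0 : F, lower_block i1 ba be_hat br u0 = row_mx (A21 - u0%:M) A22)
  /\ invmx A12 *m A11 = col_mx C13' C23'
  /\ A21 - A22 *m (invmx A12 *m A11)
     = action_mx i1 ba br C23'.
Proof.
move=> i1 sys Uba _ [Ubr Hbr] _ _ Ubhe Hbhe _ Chat A12 A11 _ uA12 [P [uP HP]] A21 A22.
have nth_lbc : forall (u0 : F) (j : 'I_(size ba)) (c : 'I_(size ba + (size be_hat + size br))),
   lower_block i1 ba be_hat br u0 j c =
   (mulx1 i1 (nth mnm0 ba j) == nth mnm0 (ba ++ be_hat ++ br) c)%:R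
   - u0 * (nth mnm0 ba j == nth mnm0 (ba ++ be_hat ++ br) c)%:R.
  move=> u0 j c; by rewrite /lower_block mxE lb_coef.
have notba : forall k : 'I_(size be_hat + size br),
    nth mnm0 (be_hat ++ br) k \notin ba.
  move=> k; have : nth mnm0 (be_hat ++ br) k \in be_hat ++ br by apply: mem_nth; rewrite size_cat.
  rewrite mem_cat => /orP [/Hbhe /and3P [_ _ ->] //| ].
  by rewrite Hbr => /andP [].
have nthba : forall j : 'I_(size ba), nth mnm0 ba j \in ba by move=> j; apply: mem_nth.
have H1 : forall u0 : F, lower_block i1 ba be_hat br u0 = row_mx (A21 - u0%:M) A22.
  move=> u0; rewrite -[LHS]hsubmxK; congr row_mx; apply/matrixP => j k.
    rewrite !mxE !lb_coef /= nth_cat ltn_ord nth_uniq //.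
    by rewrite mul0r subr0 mulrnAr mulr1.
  rewrite !mxE !lb_coef /= nth_cat ltnNge leq_addr /= addKn.
  have -> : (nth mnm0 ba j == nth mnm0 (be_hat ++ br) k) = false.
    by apply/negbTE/eqP => e; move: (notba k); rewrite -e nthba.
  by rewrite !mulr0.
have H2 : invmx A12 *m A11 = col_mx C13' C23'.
  have eC : Chat = row_mx A12 A11 by rewrite hsubmxK.
  move: HP; rewrite eC mul_mx_row => /eq_row_mx [HP1 HP2].
  have eA11 : A11 = A12 *m col_mx C13' C23'.
    by rewrite -HP2 mulmxA (mulmx1C HP1) mul1mx.
  by rewrite eA11 mulKmx.
split=> //; split=> //.
rewrite H2 -[A22]hsubmxK mul_row_col.
apply/matrixP => j i.
set a := nth mnm0 ba j.
set mj := mulx1 i1 a.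
have eL : forall k, lsubmx A22 j k = (mj == nth mnm0 be_hat k)%:R.
  move=> k; rewrite !mxE lb_coef /= nth_cat ltnNge leq_addr /= addKn nth_cat ltn_ord.
  by rewrite mul0r subr0.
have eR : forall k, rsubmx A22 j k = (mj == nth mnm0 br k)%:R.
  move=> k; rewrite !mxE lb_coef /= nth_cat ltnNge leq_addr /= addKn nth_cat.
  by rewrite ltnNge leq_addr /= addKn mul0r subr0.
have eA : A21 j i = (mj == nth mnm0 ba i)%:R.
  by rewrite !mxE lb_coef /= nth_cat ltn_ord mul0r subr0.
rewrite [LHS]mxE eA !mxE /=.
rewrite (eq_bigr (fun k : 'I_(size be_hat) => (mj == nth mnm0 be_hat k)%:R * C13' k i)); last by move=> k _; rewrite eL.
rewrite (eq_bigr (fun k : 'I_(size br) => (mj == nth mnm0 br k)%:R * C23' k i)); last by move=> k _; rewrite eR.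
rewrite -/a -/mj.
have nbhe : mj \notin be_hat -> \sum_(k < size be_hat) (mj == nth mnm0 be_hat k)%:R * C13' k i = 0.
  move=> nin; apply: big1 => k _.
  case: eqP => [e|]; last by rewrite mul0r.
  by move: nin; rewrite e mem_nth.
case: ifP => [inba | ninba].
  have nbr : mj \notin br by rewrite Hbr inba andbF.
  have nbe : mj \notin be_hat.
    by apply/negP => /Hbhe /and3P [_ _]; rewrite inba.
  rewrite nbhe // big1 ?addr0 ?subr0.
    by rewrite -{1}(nth_index mnm0 inba) nth_uniq // index_mem.
  move=> k _; case: eqP => [e|]; last by rewrite mul0r.
  by move: nbr; rewrite e mem_nth.
have inbr : mj \in br.
  by rewrite Hbr ninba andbT; apply/hasP; exists a => //; apply: nthba.
have nbe : mj \notin be_hat.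
  by apply/negP => /Hbhe /and3P [_]; rewrite inbr.
have -> : (mj == nth mnm0 ba i) = false.
  by apply/negbTE/eqP => e; move: ninba; rewrite e nthba.
rewrite nbhe // !add0r.
case: pickP => [k /eqP hk | none]; last first.
  have hi : (index mj br < size br)%N by rewrite index_mem.
  by move: (none (Ordinal hi)); rewrite /= nth_index ?eqxx.
rewrite (bigD1 k) //= big1 ?addr0.
  by rewrite hk eqxx mul1r.
move=> k' nk'; rewrite -hk nth_uniq //.
have -> : (k == k' :> nat) = false by apply/negbTE; rewrite eq_sym.
by rewrite mul0r.
Qed.
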